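(* For any time warp $f$, $n\in\omega\setminus\{0\}$, and $m\in\omega$: $f^{\ell}(n)=m\iff f(m-1)<n\le f(m)$; $f^{\ell}(n)=\omega\iff f(\omega)<n$; $f^{\ell}(\omega)=m\iff f(m)=\omega$ and $f^{\ell}(k)=m$ for some $k\in\omega$; $f^{\ell}(\omega)=\omega\iff f(\omega)<\omega$ or ($f(\omega)=\omega$ and $f(k)<\omega$ for all $k\in\omega$).
   Context: Let $\overline{\omega}=\omega\cup\{\omega\}$ be the natural numbers with a top element $\omega$ adjoined, with its natural total order. A time warp is a monotone map $f\colon\overline{\omega}\to\overline{\omega}$ with $f(0)=0$ and $f(\omega)=\bigvee\{f(n)\mid n\in\omega\}$. The set $W$ of time warps is ordered pointwise and $fg:=f\circ g$; $\mathrm{id}$ is the identity. The right residual $/$ is the binary operation on $W$ with $f\le h/g\iff fg\le h$ for all $f,g,h\in W$. Define $f^{\ell}:=\mathrm{id}/f$. *)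

(* Defs.v *)
From Stdlib Require Import Arith Lia.

Inductive wbar : Type :=
| Fin : nat -> wbar
| Om : wbar.

Definition wle (x y : wbar) : Prop :=
  match x, y with
  | Fin m, Fin n => m <= n
  | _, Om => True
  | Om, Fin _ => False
  end.

Definition wlt (x y : wbar) : Prop := wle x y /\ x <> y.

Definition is_sup (s : wbar) (F : nat -> wbar) : Prop :=
  (forall n, wle (F n) s) /\ (forall u, (forall n, wle (F n) u) -> wle s u).

Definition time_warp (f : wbar -> wbar) : Prop :=
  (forall x y, wle x y -> wle (f x) (f y)) /\
  f (Fin 0) = Fin 0 /\
  is_sup (f Om) (fun n => f (Fin n)).

Definition fle (f g : wbar -> wbar) : Prop := forall x, wle (f x) (g x).

(* r is the right residual h / g in W: for every time warp f,
   f <= r  <->  f o g <= h. *)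
Definition is_rresidual (r h g : wbar -> wbar) : Prop :=
  time_warp r /\
  forall f, time_warp f -> (fle f r <-> fle (fun x => f (g x)) h).

Definition is_lres (fl f : wbar -> wbar) : Prop :=
  is_rresidual fl (fun x => x) f.

(* Main.v *)
Require Import Defs.
From Stdlib Require Import Arith Lia Classical.

Lemma wle_refl x : wle x x.
Proof. destruct x; simpl; auto. Qed.

Lemma wle_trans x y z : wle x y -> wle y z -> wle x z.
Proof. destruct x, y, z; simpl; intros; auto; try lia; contradiction. Qed.

Lemma wle_antisym x y : wle x y -> wle y x -> x = y.
Proof. destruct x, y; simpl; intros; try contradiction; auto. f_equal; lia. Qed.

Lemma wle_0 x : wle (Fin 0) x.
Proof. destruct x; simpl; auto; lia. Qed.

Lemma wle_total x y : wle x y \/ wlt y x.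
Proof.
  destruct x as [a|], y as [b|]; simpl; unfold wlt; simpl.
  - destruct (le_lt_dec a b); [left; lia| right; split; [lia| intro H; injection H; lia]].
  - left; auto.
  - right; split; auto; discriminate.
  - left; auto.
Qed.

Lemma wlt_not_le x y : wlt x y -> wle y x -> False.
Proof. intros [H1 H2] H3. apply H2, wle_antisym; auto. Qed.

Lemma sup_attained a F : is_sup (Fin a) F -> exists k, F k = Fin a.
Proof.
  intros [H1 H2].
  destruct a as [|a].
  - exists 0. specialize (H1 0). destruct (F 0) as [b|]; simpl in H1; [f_equal; lia|contradiction].
  - destruct (Classical_Prop.classic (exists k, F k = Fin (S a))) as [H|H]; auto.
    exfalso. assert (wle (Fin (S a)) (Fin a)); [|simpl in *; lia].
    apply H2. intro n. specialize (H1 n). destruct (F n) as [b|] eqn:E; simpl in *; [|contradiction].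
    assert (b <> S a) by (intro; subst; apply H; exists n; auto). lia.
Qed.

Definition step (n : nat) (v : wbar) (x : wbar) : wbar :=
  match x with Fin k => if k <? n then Fin 0 else v | Om => v end.

Lemma step_tw n v : n <> 0 -> time_warp (step n v).
Proof.
  intro Hn. split; [|split].
  - intros [a|] [b|]; simpl; intros H; try contradiction.
    + destruct (a <? n) eqn:E1, (b <? n) eqn:E2; try apply wle_0; try apply wle_refl.
      apply Nat.ltb_lt in E2; apply Nat.ltb_ge in E1; lia.
    + destruct (a <? n); auto using wle_0, wle_refl.
    + apply wle_refl.
  - simpl. destruct (0 <? n) eqn:E; auto. apply Nat.ltb_ge in E; lia.
  - split.
    + intro k; simpl. destruct (k <? n); auto using wle_0, wle_refl.
    + intros u H. specialize (H n). simpl in H. rewrite Nat.ltb_irrefl in H. exact H.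
Qed.

Section S.
Variables f fl : wbar -> wbar.
Hypothesis Hf : time_warp f.
Hypothesis Hl : is_lres fl f.

Lemma fmono x y : wle x y -> wle (f x) (f y).
Proof. apply Hf. Qed.
Lemma lmono x y : wle x y -> wle (fl x) (fl y).
Proof. apply Hl. Qed.

Lemma A x : wle (fl (f x)) x.
Proof.
  destruct Hl as [Ht H]. apply (proj1 (H fl Ht)). intro; apply wle_refl.
Qed.

Lemma B h : time_warp h -> (forall x, wle (h (f x)) x) -> forall x, wle (h x) (fl x).
Proof. intros Ht Hc. destruct Hl as [_ H]. apply (proj2 (H h Ht)). exact Hc. Qed.

Lemma L1 n m : wle (Fin n) (f (Fin m)) -> wle (fl (Fin n)) (Fin m).
Proof. intro H. eapply wle_trans; [apply lmono, H| apply A]. Qed.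

Lemma L2 n m : n <> 0 -> wlt (f (Fin m)) (Fin n) -> wle (Fin (S m)) (fl (Fin n)).
Proof.
  intros Hn Hlt.
  assert (H := B (step n (Fin (S m))) (step_tw _ _ Hn)).
  assert (Hc : forall x, wle (step n (Fin (S m)) (f x)) x).
  { intro x.
    destruct (wle_total (Fin n) (f x)) as [Hge|Hlt2].
    - destruct x as [j|]; [|destruct (f Om) as [b|]; simpl; [destruct (b <? n)|]; exact I].
      destruct (le_lt_dec (S m) j) as [Hj|Hj].
      + unfold step; destruct (f (Fin j)) as [b|]; [destruct (b <? n)|]; simpl; lia.
      + exfalso. assert (X : wle (f (Fin j)) (f (Fin m))) by (apply fmono; simpl; lia).
        apply (wlt_not_le _ _ Hlt). exact (wle_trans _ _ _ Hge X).
    - destruct Hlt2 as [Hl2 Hne]. destruct (f x) as [b|]; simpl in Hl2; [|contradiction].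
      assert (b <> n) by congruence.
      simpl. replace (b <? n) with true by (symmetry; apply Nat.ltb_lt; lia). apply wle_0. }
  specialize (H Hc (Fin n)).
  simpl in H. rewrite Nat.ltb_irrefl in H. exact H.
Qed.

Lemma L3 n : n <> 0 -> wlt (f Om) (Fin n) -> fl (Fin n) = Om.
Proof.
  intros Hn Hlt.
  assert (H := B (step n Om) (step_tw _ _ Hn)).
  assert (Hc : forall x, wle (step n Om (f x)) x).
  { intro x. assert (Hx : wle (f x) (f Om)) by (apply fmono; destruct x; simpl; auto).
    destruct (wle_total (Fin n) (f x)) as [Hge|[Hl2 Hne]].
    - exfalso. apply (wlt_not_le _ _ Hlt). exact (wle_trans _ _ _ Hge Hx).
    - destruct (f x) as [b|]; simpl in Hl2; [|contradiction].
      assert (b <> n) by congruence.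
      simpl. replace (b <? n) with true by (symmetry; apply Nat.ltb_lt; lia). apply wle_0. }
  specialize (H Hc (Fin n)).
  simpl in H. rewrite Nat.ltb_irrefl in H. destruct (fl (Fin n)); simpl in H; auto; contradiction.
Qed.

Lemma exists_above n : n <> 0 -> wle (Fin n) (f Om) -> exists k, wle (Fin n) (f (Fin k)).
Proof.
  intros Hn H. destruct Hf as [_ [_ Hs]].
  destruct (f Om) as [a|] eqn:E.
  - destruct (sup_attained _ _ Hs) as [k Hk]. exists k. rewrite Hk. exact H.
  - destruct (Classical_Prop.classic (exists k, wle (Fin n) (f (Fin k)))) as [?|Hno]; auto.
    exfalso. assert (wle Om (Fin (n-1))); [|simpl in *; auto].
    apply (proj2 Hs). intro k. destruct (wle_total (Fin n) (f (Fin k))) as [?|[Hk Hne]].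
    + exfalso; apply Hno; eauto.
    + destruct (f (Fin k)) as [c|]; simpl in *; [|contradiction].
      assert (c <> n) by congruence. lia.
Qed.

Lemma P1 n m : n <> 0 ->
  (fl (Fin n) = Fin m <-> (wlt (f (Fin (m - 1))) (Fin n) /\ wle (Fin n) (f (Fin m)))).
Proof.
  intro Hn. split.
  - intro E. split.
    + destruct m as [|m].
      * simpl. destruct Hf as [_ [H0 _]]. rewrite H0. split; simpl; [lia|intro X; injection X; lia].
      * destruct (wle_total (Fin n) (f (Fin (S m - 1)))) as [H|H]; auto.
        exfalso. apply L1 in H. rewrite E in H. simpl in H. lia.
    + destruct (wle_total (Fin n) (f (Fin m))) as [H|H]; auto.
      exfalso. apply L2 in H; auto. rewrite E in H. simpl in H. lia.
  - intros [H1 H2]. apply wle_antisym; [apply L1; auto|].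
    destruct m as [|m]; [apply wle_0|]. replace (S m - 1) with m in H1 by lia.
    apply L2; auto.
Qed.

Lemma P2 n : n <> 0 -> (fl (Fin n) = Om <-> wlt (f Om) (Fin n)).
Proof.
  intro Hn. split; [|apply L3; auto].
  intro E. destruct (wle_total (Fin n) (f Om)) as [H|H]; auto.
  exfalso. destruct (exists_above n Hn H) as [k Hk]. apply L1 in Hk. rewrite E in Hk. exact Hk.
Qed.

Lemma fl0 : fl (Fin 0) = Fin 0.
Proof. apply Hl. Qed.

Lemma bound_all m : f (Fin m) = Om -> forall n, wle (fl (Fin n)) (Fin m).
Proof.
  intros E n. destruct n as [|n]. rewrite fl0; apply wle_0.
  apply L1. rewrite E. exact I.
Qed.

Lemma P3 m : fl Om = Fin m <-> (f (Fin m) = Om /\ exists k : nat, fl (Fin k) = Fin m).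
Proof.
  destruct Hl as [[_ [_ Hs]] _].
  split.
  - intro E. rewrite E in Hs. split; [|apply sup_attained; auto].
    destruct (f (Fin m)) as [a|] eqn:Ea; auto. exfalso.
    assert (H := L2 (S a) m ltac:(lia) ltac:(rewrite Ea; split; simpl; [lia|intro X; injection X; lia])).
    assert (H' := proj1 Hs (S a)). simpl in H'.
    assert (X := wle_trans _ _ _ H H'). simpl in X. lia.
  - intros [E [k Hk]]. apply wle_antisym.
    + apply (proj2 Hs). apply bound_all; auto.
    + rewrite <- Hk. apply (proj1 Hs).
Qed.

Lemma P4 : fl Om = Om <-> (wlt (f Om) Om \/ (f Om = Om /\ forall k : nat, wlt (f (Fin k)) Om)).
Proof.
  split.
  - intro E. destruct (f Om) as [a|] eqn:Ea.
    + left. split; simpl; auto; discriminate.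
    + right. split; auto. intro k. split; [destruct (f (Fin k)); simpl; auto|].
      intro Hk. destruct Hl as [[_ [_ Hs]] _].
      assert (X := proj2 Hs (Fin k) (bound_all k Hk)). rewrite E in X. exact X.
  - intros [H|[H1 H2]].
    + destruct (f Om) as [a|] eqn:Ea; [|destruct H; congruence].
      assert (X := L3 (S a) ltac:(lia) ltac:(rewrite Ea; split; simpl; [lia|intro X; injection X; lia])).
      destruct Hl as [[_ [_ Hs]] _]. assert (Y := proj1 Hs (S a)). simpl in Y; rewrite X in Y.
      destruct (fl Om); simpl in Y; auto; contradiction.
    + destruct (fl Om) as [m|] eqn:E; auto.
      apply P3 in E. destruct E as [E _]. destruct (H2 m) as [_ X]. congruence.
Qed.

End S.

Theorem lemma2p7 (f fl : wbar -> wbar) :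
  time_warp f -> is_lres fl f ->
  (forall n m : nat, n <> 0 ->
     (fl (Fin n) = Fin m <-> (wlt (f (Fin (m - 1))) (Fin n) /\ wle (Fin n) (f (Fin m))))) /\
  (forall n : nat, n <> 0 -> (fl (Fin n) = Om <-> wlt (f Om) (Fin n))) /\
  (forall m : nat,
     fl Om = Fin m <-> (f (Fin m) = Om /\ exists k : nat, fl (Fin k) = Fin m)) /\
  (fl Om = Om <->
     (wlt (f Om) Om \/ (f Om = Om /\ forall k : nat, wlt (f (Fin k)) Om))).
Proof.
  intros Hf Hl. split; [|split; [|split]].
  - intros; apply P1; auto.
  - intros; apply P2; auto.
  - intros; apply P3; auto.
  - apply P4; auto.
Qed.
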